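(* Let $f:\mathbb{R}^n\times\mathbb{R}\to\mathbb{R}^n$ be $C^1$, let $\lambda_-<\lambda_+$, let $\Lambda:\mathbb{R}\to(\lambda_-,\lambda_+)$ be a parameter shift from $\lambda_-$ to $\lambda_+$, and let $r>0$. Let $\Phi(t,s,x_0)$ denote the solution cocycle of $\dot x=f(x,\Lambda(rt))$, and let $\phi_\pm$ denote the flow of the autonomous system $\dot x=f(x,\lambda_\pm)$. Let $\mathcal{A}=\{A_t\}_{t\in\mathbb{R}}$ be a nonautonomous set that is invariant, i.e. $\Phi(t,s,A_s)=A_t$ for all $t,s\in\mathbb{R}$. If the upper backward limit $A_{-\infty}$ (respectively the upper forward limit $A_{+\infty}$) is bounded, then $$\phi_-(s,A_{-\infty})=A_{-\infty}\quad(\text{respectively } \phi_+(s,A_{+\infty})=A_{+\infty})$$ for all $s\in\mathbb{R}$.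
   Context: A parameter shift from $\lambda_-$ to $\lambda_+$ is a smooth function $\Lambda:\mathbb{R}\to(\lambda_-,\lambda_+)$ with $\lim_{\tau\to\pm\infty}\Lambda(\tau)=\lambda_\pm$ and $\lim_{\tau\to\pm\infty}\frac{d\Lambda}{d\tau}(\tau)=0$. Solutions of $\dot x=f(x,\Lambda(rt))$ are assumed to exist for all time; $\Phi(t,s,x_0)$ denotes the value at time $t$ of the solution with $x(s)=x_0$. A nonautonomous set is a family $\mathcal{A}=\{A_t\}_{t\in\mathbb{R}}$ of nonempty subsets $A_t\subset\mathbb{R}^n$ (the fibres). Its upper forward and backward limits are $A_{+\infty}=\bigcap_{\tau>0}\overline{\bigcup_{t\ge\tau}A_t}$ and $A_{-\infty}=\bigcap_{\tau>0}\overline{\bigcup_{t\le-\tau}A_t}$. *)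

(* Defs.v *)
From HB Require Import structures.
From mathcomp Require Import all_boot all_order all_algebra.
From mathcomp Require Import all_classical all_reals all_analysis.
Set Implicit Arguments. Unset Strict Implicit. Unset Printing Implicit Defensive.
Import Order.TTheory GRing.Theory Num.Theory.
Import numFieldNormedType.Exports.
Local Open Scope classical_set_scope.
Local Open Scope ring_scope.

Definition C1_field (R : realType) (n : nat)
    (f : 'rV[R]_n * R -> 'rV[R]_n) : Prop :=
  (forall z, differentiable f z) /\ (forall v, continuous ('D_v f)).

Definition smooth_fun (R : realType) (g : R -> R) : Prop :=
  forall k x, derivable (iter k (@derive1 R R) g) x 1.

Definition parameter_shift (R : realType) (Lam : R -> R) (lm lp : R) : Prop :=
  smooth_fun Lam /\
  (forall t, lm < Lam t < lp) /\
  (Lam t @[t --> -oo] --> lm) /\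
  (Lam t @[t --> +oo] --> lp) /\
  (derive1 Lam t @[t --> -oo] --> 0) /\
  (derive1 Lam t @[t --> +oo] --> 0).

Definition is_solution (R : realType) (n : nat)
    (g : R -> 'rV[R]_n -> 'rV[R]_n) (x : R -> 'rV[R]_n) : Prop :=
  forall t, derivable x t 1 /\ derive1 x t = g t (x t).

Definition solution_cocycle (R : realType) (n : nat)
    (f : 'rV[R]_n * R -> 'rV[R]_n) (Lam : R -> R) (r : R)
    (Phi : R -> R -> 'rV[R]_n -> 'rV[R]_n) : Prop :=
  forall s x0, Phi s s x0 = x0 /\
    is_solution (fun t x => f (x, Lam (r * t))) (fun t => Phi t s x0).

Definition autonomous_flow (R : realType) (n : nat)
    (f : 'rV[R]_n * R -> 'rV[R]_n) (lam : R)
    (phi : R -> 'rV[R]_n -> 'rV[R]_n) : Prop :=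
  forall x0, phi 0 x0 = x0 /\
    is_solution (fun _ x => f (x, lam)) (fun t => phi t x0).

Definition nonautonomous_set (R : realType) (n : nat)
    (A : R -> set 'rV[R]_n) : Prop := forall t, A t !=set0.

Definition invariant_set (R : realType) (n : nat)
    (Phi : R -> R -> 'rV[R]_n -> 'rV[R]_n) (A : R -> set 'rV[R]_n) : Prop :=
  forall t s, Phi t s @` A s = A t.

Definition upper_forward_limit (R : realType) (n : nat)
    (A : R -> set 'rV[R]_n) : set 'rV[R]_n :=
  \bigcap_(tau in [set tau : R | 0 < tau])
     closure (\bigcup_(t in [set t : R | tau <= t]) A t).

Definition upper_backward_limit (R : realType) (n : nat)
    (A : R -> set 'rV[R]_n) : set 'rV[R]_n :=
  \bigcap_(tau in [set tau : R | 0 < tau])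
     closure (\bigcup_(t in [set t : R | t <= - tau]) A t).

Definition bounded_rv (R : realType) (n : nat) (S : set 'rV[R]_n) : Prop :=
  exists M : R, forall x, S x -> `|x| <= M.

(* Main.v *)
Require Import Defs.
From HB Require Import structures.
From mathcomp Require Import all_boot all_order all_algebra.
From mathcomp Require Import all_classical all_reals all_analysis.
From mathcomp Require Import ring lra.
Set Implicit Arguments. Unset Strict Implicit. Unset Printing Implicit Defensive.
Import Order.TTheory GRing.Theory Num.Theory.
Import numFieldNormedType.Exports.
Local Open Scope classical_set_scope.
Local Open Scope ring_scope.

Section S.
Variable R : realType.

Lemma chain_diff (U W : normedModType R) (g : U -> W) (gam : R -> U) c :
  derivable gam c 1 -> differentiable g (gam c) ->
  derivable (g \o gam) c 1 /\ derive1 (g \o gam) c = 'd g (gam c) (derive1 gam c).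
Proof.
move=> /derivable1_diffP dgam dg.
have dc : differentiable (g \o gam) c by apply: differentiable_comp.
refine (conj (proj2 (derivable1_diffP _ _) dc) _).
by rewrite derive1E' // diff_comp // derive1E'.
Qed.

Lemma chain1 (W : normedModType R) (g : R -> W) (gam : R -> R) c :
  derivable gam c 1 -> derivable g (gam c) 1 ->
  derivable (g \o gam) c 1 /\ derive1 (g \o gam) c = derive1 gam c *: derive1 g (gam c).
Proof.
move=> dgam /derivable1_diffP dg.
have [h1 h2] := chain_diff dgam dg; split => //; rewrite h2.
rewrite (derive1E' dg) -linearZ /=; congr ('d g (gam c) _).
by rewrite /GRing.scale /= mulr1.
Qed.

Lemma seg_derive (U : normedModType R) (a w : U) c :
  derivable (fun t : R => a + t *: w) c 1 /\ derive1 (fun t : R => a + t *: w) c = w.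
Proof.
have d : differentiable (fun t : R => a + t *: w) c.
  apply: differentiableD => //. 
refine (conj (proj2 (derivable1_diffP _ _) d) _).
rewrite derive1E' //.
by rewrite diffD // diff_cst /= add0r diff_val scale1r.
Qed.


Lemma W_derive (E : R -> R) (m k : R) t : derivable E t 1 ->
  is_derive t 1 (fun t => (E t + m) * expR (k * t))
    ((derive1 E t + k * (E t + m)) * expR (k * t)).
Proof.
move=> dE.
have h1 : is_derive t 1 (fun t => E t + m) (derive1 E t).
  apply: DeriveDef; first exact: derivableD.
  by rewrite deriveD // derive_cst addr0 derive1E.
have h2 : is_derive t 1 (fun t => k * t) k.
  have := @is_deriveZ R _ _ id k t 1 1 (is_derive_id _ _).
  by rewrite /GRing.scale /= mulr1.
have h3 : is_derive t 1 (expR \o (fun t => k * t)) (expR (k * t) * k).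
  exact: is_derive1_comp.
have := is_deriveM h1 h3.
move=> H.
have -> : (fun t0 : R => (E t0 + m) * expR (k * t0)) = (fun t0 => E t0 + m) * (expR \o ( *%R k)) by apply/funext.
have -> : (derive1 E t + k * (E t + m)) * expR (k * t) = (E t + m) *: (expR (k * t) * k) + (expR \o ( *%R k)) t *: derive1 E t.
  rewrite /GRing.scale /=; ring.
exact: H.
Qed.

Lemma der_cont (F : R -> R) (A : set R) : (forall t, derivable F t 1) -> {within A, continuous F}.
Proof.
move=> dF; apply: continuous_subspaceT => x.
exact/differentiable_continuous/derivable1_diffP.
Qed.

Lemma gronwall (E : R -> R) (M c a b : R) : 0 < M -> a <= b ->
  (forall t, derivable E t 1) ->
  (forall t, a <= t <= b -> `|derive1 E t| <= M * E t + c) ->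
  (E b + c / M <= (E a + c / M) * expR (M * (b - a))) /\
  (E a + c / M <= (E b + c / M) * expR (M * (b - a))).
Proof.
move=> M0 ab dE hE.
have Mc : M * (c / M) = c by rewrite mulrC divfK // gt_eqF.
have dW k t := W_derive (c / M) k (dE t).
refine (conj _ _).
- pose W := fun t => (E t + c / M) * expR ((- M) * t).
  have key : W b <= W a.
    apply: (@ler0_derive1_nincr R W a b) => //.
    + move=> x /[!in_itv] /= /andP [ax xb].
      rewrite derive1E (@derive_val _ _ _ _ _ _ _ (dW _ x)) pmulr_lle0 ?expR_gt0 //.
      have := hE x; rewrite (ltW ax) (ltW xb) => /(_ isT) /ler_normlP [h1 h2].
      rewrite mulNr mulrDr Mc; lra.
    + by apply: der_cont => x; case: (dW (- M) x).
  have e1 : E b + c / M = W b * expR (M * b).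
    by rewrite /W -mulrA -expRD mulNr addNr expR0 mulr1.
  have e2 : (E a + c / M) * expR (M * (b - a)) = W a * expR (M * b).
    by rewrite /W -mulrA -expRD; congr (_ * expR _); ring.
  by rewrite e1 e2 ler_wpM2r // ltW // expR_gt0.
- pose W := fun t => (E t + c / M) * expR (M * t).
  have key : W a <= W b.
    apply: (@ger0_derive1_ndecr R W a b) => //.
    + move=> x /[!in_itv] /= /andP [ax xb].
      rewrite derive1E (@derive_val _ _ _ _ _ _ _ (dW _ x)) pmulr_lge0 ?expR_gt0 //.
      have := hE x; rewrite (ltW ax) (ltW xb) => /(_ isT) /ler_normlP [h1 h2].
      rewrite mulrDr Mc; lra.
    + by apply: der_cont => x; case: (dW M x).
  have e1 : E a + c / M = W a * expR (- (M * a)).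
    by rewrite /W -mulrA -expRD addrN expR0 mulr1.
  have e2 : (E b + c / M) * expR (M * (b - a)) = W b * expR (- (M * a)).
    by rewrite /W -mulrA -expRD; congr (_ * expR _); ring.
  by rewrite e1 e2 ler_wpM2r // ltW // expR_gt0.
Qed.

Lemma cont_eps (F : R -> R) t e : {for t, continuous F} -> 0 < e ->
  exists2 d, 0 < d & forall x, `|x - t| < d -> `|F x - F t| < e.
Proof.
move=> c e0.
have := (cvgrPdist_lt _ _).1 c e e0; move=> /(_ _) /nbhs_ballP[d d0 hd].
exists d => // x xt; rewrite distrC; apply: hd.
by rewrite -ball_normE /= distrC.
Qed.


Lemma cont_ind (E : R -> R) (s k : R) : 0 <= s -> k <= 1 ->
  (forall t, {for t, continuous E}) -> E 0 < k ->
  (forall t, 0 <= t <= s -> (forall u, 0 <= u <= t -> E u <= 1) -> E t < k) ->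
  forall t, 0 <= t <= s -> E t < k.
Proof.
move=> s0 k1 cE E0 H.
pose S := [set t | (0 <= t <= s) /\ forall u, 0 <= u <= t -> E u <= 1].
have S0 : S 0.
  split; first by rewrite lexx s0.
  move=> u /andP[u0 u1]; have -> : u = 0 by apply/eqP; rewrite eq_le u0 u1.
  exact: (ltW (lt_le_trans E0 k1)).
have ubs : ubound S s by move=> x [/andP[_ ->]].
have hS : has_sup S by split; [exists 0 | exists s].
pose m := sup S.
have m0 : 0 <= m by apply: sup_upper_bound.
have ms : m <= s by apply: ge_sup => //; exists 0.
have ha : forall u, 0 <= u -> u < m -> E u <= 1.
  move=> u u0 um.
  have ep : 0 < m - u by rewrite subr_gt0.
  have [e [_ He] me] := sup_adherent ep hS.
  apply: He; rewrite u0 /=; apply: ltW; move: me; rewrite /m; lra.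
have hb : E m <= 1.
  rewrite leNgt; apply/negP => Em.
  have ep : 0 < E m - 1 by rewrite subr_gt0.
  have [d d0 hd] := cont_eps (cE m) ep.
  have [m00|mpos] := eqVneq m 0.
    by move: Em; rewrite m00 => Em; move: (lt_le_trans E0 k1); lra.
  have mp : 0 < m by rewrite lt_neqAle eq_sym mpos m0.
  have [h|h] := leP (m - d / 2) 0.
    have md : `|0 - m| < d by rewrite sub0r normrN ger0_norm //; lra.
    have /ltr_normlP [h3 h4] := hd 0 md.
    have := ha 0 (lexx 0) mp; lra.
  have md : `|(m - d / 2) - m| < d.
    have -> : m - d / 2 - m = - (d / 2) by ring.
    rewrite normrN ger0_norm; lra.
  have /ltr_normlP [h3 h4] := hd _ md.
  have := ha (m - d / 2) (ltW h) ltac:(lra); lra.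
have hle : forall u, 0 <= u <= m -> E u <= 1.
  move=> u /andP[u0 um]; have [ul|ue] := ltP u m; first exact: ha.
  by have -> : u = m by apply/eqP; rewrite eq_le um ue.
have hm : E m < k by apply: H => //; rewrite m0 ms.
have mse : m = s.
  apply/eqP; rewrite eq_le ms /= leNgt; apply/negP => lms.
  have ep : 0 < k - E m by rewrite subr_gt0.
  have [d d0 hd] := cont_eps (cE m) ep.
  have [t' [mt' [t's t'd]]] : exists t', m < t' /\ t' <= s /\ t' - m < d.
    case: (leP s (m + d / 2)) => h; [exists s | exists (m + d / 2)];
      (do 2 (try refine (conj _ _))); lra.
  have St' : S t'.
    refine (conj _ _); first by apply/andP; split; lra.
    move=> u /andP[u0 ut]; have [ul|ue] := ltP u m; first exact: ha.
    have md : `|u - m| < d by rewrite ger0_norm; lra.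
    have /ltr_normlP [h3 h4] := hd _ md; lra.
  have := sup_upper_bound hS St'; rewrite -/m; lra.
move=> t /andP[t0 ts]; apply: H; first by rewrite t0 ts.
move=> u /andP[u0 ut]; apply: hle; rewrite u0 mse; lra.
Qed.
End S.

Section S.
Variable R : realType.
Section V.
Variable n : nat.
Local Notation V := 'rV[R]_n.

Definition sq (v : V) : R := \sum_(i < n) (v 0 i) ^+ 2.

Lemma coord_le (v : V) i : `|v 0 i| <= `|v|.
Proof.
rewrite [leRHS]/Num.Def.normr/= mx_normrE.
apply: le_trans; last exact: (le_bigmax _ _ (0, i)).
by [].
Qed.

Lemma norm_le (v : V) c : 0 <= c -> (forall i, `|v 0 i| <= c) -> `|v| <= c.
Proof.
move=> c0 h; rewrite [leLHS]/Num.Def.normr/= mx_normrE.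
apply: bigmax_le => // -[i j] _ /=.
by rewrite (ord1 i); apply: h.
Qed.

Lemma sq_ge0 v : 0 <= sq v.
Proof. by apply: sumr_ge0 => i _; rewrite sqr_ge0. Qed.

Lemma coord_le_sq (v : V) i : (v 0 i) ^+ 2 <= sq v.
Proof.
rewrite /sq (bigD1 i) //= lerDl; apply: sumr_ge0 => j _; exact: sqr_ge0.
Qed.

Lemma norm_sq (v : V) : `|v| ^+ 2 <= sq v.
Proof.
have h : `|v| <= Num.sqrt (sq v).
  apply: norm_le; first exact: sqrtr_ge0.
  by move=> i; rewrite -sqrtr_sqr ler_wsqrtr // coord_le_sq.
rewrite -(sqr_sqrtr (sq_ge0 v)).
by rewrite lerXn2r ?nnegrE ?sqrtr_ge0 // normr_ge0.
Qed.

Lemma sq_le (v : V) : sq v <= n%:R * `|v| ^+ 2.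
Proof.
have : sq v <= \sum_(i < n) `|v| ^+ 2.
  apply: ler_sum => i _; rewrite -real_normK ?num_real //.
  by rewrite lerXn2r ?nnegrE ?normr_ge0 // coord_le.
by rewrite sumr_const card_ord mulr_natl.
Qed.


Lemma sq_derive (d : R -> V) t : derivable d t 1 ->
  is_derive t 1 (fun t => sq (d t)) (\sum_(i < n) 2 * d t 0 i * derive1 d t 0 i).
Proof.
move=> dd.
have dm := (derivable_mxP d t 1).1 dd.
have comp i : derive1 d t 0 i = derive1 (fun x => d x 0 i) t.
  by rewrite !derive1E (derive_mx dd) mxE.
have hi i : is_derive t 1 (fun x => (d x 0 i) ^+ 2) (2 * d t 0 i * derive1 d t 0 i).
  have h1 : is_derive t 1 (fun x => d x 0 i) (derive1 d t 0 i).
    by apply: DeriveDef => //; rewrite comp derive1E.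
  have := is_deriveM h1 h1.
  have -> : ((fun x => d x 0 i) * (fun x => d x 0 i)) = (fun x => (d x 0 i) ^+ 2).
    by apply/funext => x; rewrite /= expr2.
  rewrite /GRing.scale /=; suff -> : 2 * d t 0 i * derive1 d t 0 i = d t 0 i * derive1 d t 0 i + d t 0 i * derive1 d t 0 i by []; ring.
have := is_derive_sum hi.
by rewrite fct_sumE.
Qed.


Lemma dsq_bound (a b : V) (L e : R) : 0 <= L -> 0 <= e -> `|a| <= 1 ->
  `|b| <= L * `|a| + e ->
  `|\sum_(i < n) 2 * a 0 i * b 0 i| <= (2 * n%:R * L) * sq a + 2 * n%:R * e.
Proof.
move=> L0 e0 a1 hb.
apply: le_trans (ler_norm_sum _ _ _) _.
apply: (@le_trans _ _ (\sum_(i < n) (2 * `|a| * (L * `|a| + e)))).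
  apply: ler_sum => i _; rewrite !normrM ger0_norm //.
  rewrite -!mulrA ler_pM2l //; apply: ler_pM => //; first exact: coord_le.
  exact: le_trans (coord_le _ _) hb.
rewrite sumr_const card_ord -mulr_natl.
have h1 : L * `|a| ^+ 2 <= L * sq a by rewrite ler_wpM2l // norm_sq.
have h2 : e * `|a| <= e by rewrite ler_piMr.
have n0 : (0 : R) <= n%:R by [].
have : 2 * `|a| * (L * `|a| + e) <= 2 * L * sq a + 2 * e.
  rewrite expr2 in h1; lra.
move=> /(ler_wpM2l n0); lra.
Qed.

Lemma ccl (u v : R -> V) (s L e k : R) : 0 <= s -> 0 <= L -> 0 <= e -> k <= 1 ->
  (forall t, derivable u t 1) -> (forall t, derivable v t 1) ->
  (forall t, 0 <= t <= s -> `|u t - v t| <= 1 ->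
     `|derive1 u t - derive1 v t| <= L * `|u t - v t| + e) ->
  (sq (u 0 - v 0) + 2 * n%:R * e) * expR ((2 * n%:R * L + 1) * s) < k ->
  sq (u s - v s) < k.
Proof.
move=> s0 L0 e0 k1 du dv H Hi.
set M := 2 * n%:R * L + 1.
set c := 2 * n%:R * e.
rewrite -/M -/c in Hi.
have M1 : 1 <= M by rewrite /M lerDr; apply: mulr_ge0 => //; apply: mulr_ge0.
have M0 : 0 < M by lra.
have c0 : 0 <= c by apply: mulr_ge0 => //; apply: mulr_ge0.
have cM : c / M <= c by rewrite ler_pdivrMr // ler_peMr.
have cM0 : 0 <= c / M by apply: divr_ge0 => //; lra.
pose d := fun t => u t - v t.
have dd t : derivable d t 1 by apply: derivableB.
have d'E t : derive1 d t = derive1 u t - derive1 v t.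
  by rewrite !derive1E deriveB.
pose E := fun t => sq (d t).
have dE t := sq_derive (dd t).
have dEd t : derivable E t 1 by case: (dE t).
have E0 : forall t, 0 <= E t by move=> t; exact: sq_ge0.
have ex1 : 1 <= expR (M * s) by rewrite -expR0 ler_expR; apply: mulr_ge0 => //; lra.
apply: (@cont_ind _ E s k) => //.
- by move=> t; apply/differentiable_continuous/derivable1_diffP.
- have := E0 0; rewrite -/(E 0) in Hi => h0.
  have : (E 0 + c) <= (E 0 + c) * expR (M * s) by rewrite ler_peMr //; lra.
  lra.
move=> t /andP[t0 ts] hE.
have hg : forall x, 0 <= x <= t -> `|derive1 E x| <= M * E x + c.
  move=> x /andP[x0 xt].
  rewrite derive1E (@derive_val _ _ _ _ _ _ _ (dE x)).
  have dx1 : `|d x| <= 1.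
    have := norm_sq (d x); have := hE x; rewrite x0 xt => /(_ isT).
    rewrite -/(E x) => h1 h2.
    have h3 := normr_ge0 (d x).
    rewrite leNgt; apply/negP => h4.
    have : 1 < `|d x| ^+ 2 by rewrite expr_gt1 //.
    lra.
  have Hx : `|derive1 d x| <= L * `|d x| + e.
    by rewrite d'E; apply: H => //; rewrite x0 /=; lra.
  have := dsq_bound L0 e0 dx1 Hx.
  rewrite -/(E x) -/c /M => h; apply: le_trans h _.
  have := E0 x; lra.
have [g _] := @gronwall _ E M c 0 t M0 t0 dEd hg.
rewrite subr0 in g.
have em : expR (M * t) <= expR (M * s) by rewrite ler_expR ler_pM2l.
have : (E 0 + c / M) * expR (M * t) <= (E 0 + c) * expR (M * s).
  apply: ler_pM; [have := E0 0; lra | exact: expR_ge0 | lra | exact: em].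
rewrite -/(E 0) in Hi; lra.
by rewrite s0 lexx.
Qed.


Lemma rev_der (W : normedModType R) (w : R -> W) t : derivable w (- t) 1 ->
  derivable (fun t => w (- t)) t 1 /\ derive1 (fun t => w (- t)) t = - derive1 w (- t).
Proof.
move=> dw.
have dn : derivable (fun t : R => - t) t 1 by apply: derivableN.
have [h1 h2] := @chain1 R W w (fun t => - t) t dn dw.
split; first exact: h1.
rewrite (_ : (fun t => w (- t)) = w \o (fun t => - t)) //.
rewrite h2 derive1E deriveN // derive_id.
by rewrite scaleN1r.
Qed.

Lemma ccl2 (u v : R -> V) (s L e k : R) : 0 <= L -> 0 <= e -> k <= 1 ->
  (forall t, derivable u t 1) -> (forall t, derivable v t 1) ->
  (forall t, `|t| <= `|s| -> `|u t - v t| <= 1 ->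
     `|derive1 u t - derive1 v t| <= L * `|u t - v t| + e) ->
  (sq (u 0 - v 0) + 2 * n%:R * e) * expR ((2 * n%:R * L + 1) * `|s|) < k ->
  sq (u s - v s) < k.
Proof.
move=> L0 e0 k1 du dv H Hi.
have [s0|s0] := leP 0 s.
  have sa : `|s| = s by rewrite ger0_norm.
  rewrite sa in Hi.
  apply: (@ccl u v s L e k) => // t /andP[t0 ts]; apply: H; rewrite sa ger0_norm //.
pose u' := fun t => u (- t).
pose v' := fun t => v (- t).
have du' t : derivable u' t 1 by have [] := @rev_der _ u t (du _).
have dv' t : derivable v' t 1 by have [] := @rev_der _ v t (dv _).
have := @ccl u' v' (- s) L e k ltac:(lra) L0 e0 k1 du' dv'.
rewrite /u' /v' !opprK oppr0; apply.
  move=> t /andP[t0 ts] h.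
  have [_ ->] := @rev_der _ u t (du _).
  have [_ ->] := @rev_der _ v t (dv _).
  rewrite -opprD normrN; apply: H => //.
  rewrite normrN (ger0_norm t0) (ltr0_norm s0); lra.
by rewrite ltr0_norm in Hi.
Qed.

End V.
End S.

Section S.
Variable R : realType.

Lemma cont_bound (T : topologicalType) (W : normedModType R) (g : T -> W) (A : set T) :
  continuous g -> compact A -> exists C, forall x, A x -> `|g x| <= C.
Proof.
move=> gc Ac.
have := compact_bounded (continuous_compact (continuous_subspaceT gc) Ac).
move=> [M [_ HM]]; exists (M + 1) => x Ax.
have : (g @` A) (g x) by exists x.
by move/(HM (M + 1) ltac:(lra)).
Qed.

Variable n : nat.
Local Notation V := 'rV[R]_n.

Definition box (r : R) : set (V * R) :=
  [set v : V | forall i, `[- r, r]%classic (v ord0 i)] `*` `[- r, r]%classic.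

Lemma box_compact r : compact (box r).
Proof.
have h1 : compact [set v : V | forall i, `[- r, r]%classic (v ord0 i)].
  have := (@rV_compact _ n (fun=> `[- r, r]%classic) (fun=> @segment_compact R (- r) r)).
  exact.
have h2 : compact (`[- r, r]%classic : set R) by exact: (@segment_compact R (- r) r).
exact: compact_setX h1 h2.
Qed.

Lemma in_box r (z : V * R) : `|z.1| <= r -> `|z.2| <= r -> box r z.
Proof.
move=> h1 h2; split => [i|] /=.
  by rewrite /= in_itv /= -ler_norml (le_trans _ h1) // (coord_le (z.1)).
by rewrite /= in_itv /= -ler_norml.
Qed.

Lemma fst_sum (F : 'I_n -> V * R) : (\sum_j F j).1 = \sum_j (F j).1.
Proof. by apply: (big_morph fst). Qed.
Lemma snd_sum (F : 'I_n -> V * R) : (\sum_j F j).2 = \sum_j (F j).2.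
Proof. by apply: (big_morph snd). Qed.


Variable f : V * R -> V.

Lemma dbound : C1_field f -> forall r, exists K, 0 <= K /\
  forall z w, `|z.1| <= r -> `|z.2| <= r -> `|'d f z w| <= K * `|w|.
Proof.
move=> [df dc] r.
have hb (e : V * R) := cont_bound (dc e) (@box_compact r).
have [C HC] : exists C : 'I_n -> R, forall j x, box r x ->
    `|'D_((delta_mx 0 j : V), (0 : R)) f x| <= C j.
  have [C HC] := boolp.choice (fun j : 'I_n => hb ((delta_mx 0 j : V), (0:R))).
  by exists C.
have [Cn HCn] := hb ((0 : V), (1 : R)).
exists (\sum_j `|C j| + `|Cn|); split.
  by apply: addr_ge0 => //; apply: sumr_ge0.
move=> z w z1 z2.
have zb := in_box z1 z2.
have ew : w = \sum_j (w.1 0 j) *: ((delta_mx 0 j : V), (0 : R)) + w.2 *: ((0 : V), (1 : R)).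
  case: w => w1 w2 /=; apply/eqP; rewrite xpair_eqE; apply/andP; split; apply/eqP.
    by rewrite fst_sum /= scaler0 addr0 {1}(row_sum_delta w1).
  by rewrite snd_sum /= big1 ?add0r ?[_%:A]mulr1 // => j _; rewrite scaler0.
have w1 : `|w.1| <= `|w| by rewrite prod_normE le_max lexx.
have w2 : `|w.2| <= `|w| by rewrite prod_normE le_max lexx orbT.
rewrite {1}ew linearD linear_sum /=.
under eq_bigr do rewrite linearZ /=.
rewrite linearZ /= mulrDl.
apply: le_trans (ler_normD _ _) _; apply: lerD.
  apply: le_trans (ler_norm_sum _ _ _) _; rewrite mulr_suml.
  apply: ler_sum => j _; rewrite normrZ -deriveE // mulrC.
  apply: ler_pM => //; last exact: le_trans (coord_le _ _) w1.
  exact: le_trans (HC j z zb) (ler_norm _).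
rewrite normrZ -deriveE // mulrC.
apply: ler_pM => //.
exact: le_trans (HCn z zb) (ler_norm _).
Qed.

Lemma conv_norm (U : normedModType R) (a b : U) (r t : R) : `|a| <= r -> `|b| <= r ->
  0 <= t <= 1 -> `|b + t *: (a - b)| <= r.
Proof.
move=> ha hb /andP[t0 t1].
have -> : b + t *: (a - b) = (1 - t) *: b + t *: a.
  by rewrite scalerBr scalerBl scale1r addrCA addrC -addrA [- _ + _]addrC.
apply: le_trans (ler_normD _ _) _; rewrite !normrZ !ger0_norm ?subr_ge0 //.
have : (1 - t) * `|b| <= (1 - t) * r by rewrite ler_wpM2l // subr_ge0.
have : t * `|a| <= t * r by rewrite ler_wpM2l.
lra.
Qed.
End S.

Section S.
Variable R : realType.
Variable n : nat.
Local Notation V := 'rV[R]_n.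
Variable f : V * R -> V.

Lemma loclip : C1_field f -> forall r, exists K, 0 <= K /\
  forall z1 z2 : V * R, `|z1.1| <= r -> `|z1.2| <= r -> `|z2.1| <= r -> `|z2.2| <= r ->
  `|f z1 - f z2| <= K * `|z1 - z2|.
Proof.
move=> hf r; have [K [K0 HK]] := dbound hf r.
have [df _] := hf.
exists K; split => // z1 z2 h11 h12 h21 h22.
set w := z1 - z2.
pose gam := fun t : R => z2 + t *: w.
have gb t : 0 <= t <= 1 -> `|(gam t).1| <= r /\ `|(gam t).2| <= r.
  by move=> t01; split; apply: conv_norm.
apply: norm_le; first by apply: mulr_ge0.
move=> i.
pose h := fun t => f (gam t) 0 i.
have hd (t : R) : is_derive t (1 : R) h ('d f (gam t) w 0 i).
  have [dg g'] := seg_derive z2 w t.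
  have [dfg fg'] := chain_diff dg (df (gam t)).
  rewrite g' in fg'.
  have dm := (derivable_mxP _ t 1).1 dfg.
  apply: DeriveDef; first exact: dm.
  by rewrite -fg' derive1E (derive_mx dfg) mxE.
have dh (x : R) : derivable h x 1 by case: (hd x).
have [c c01 hc] := @MVT_segment R h (fun t => 'd f (gam t) w 0 i) 0 1 ler01 (fun x _ => hd x)
  (der_cont dh).
have h1 : h 1 = f z1 0 i by rewrite /h /gam scale1r /w addrC subrK.
have h0 : h 0 = f z2 0 i by rewrite /h /gam scale0r addr0.
rewrite !mxE -h1 -h0 hc subr0 mulr1.
apply: le_trans (coord_le _ _) _.
have := gb c; rewrite in_itv /= in c01 => /(_ c01) [g1 g2].
exact: HK.
Qed.

Lemma traj_bound (p : R -> V) (S : R) : (forall t, derivable p t 1) ->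
  exists C, 0 <= C /\ forall t, `|t| <= S -> `|p t| <= C.
Proof.
move=> dp.
have pc : continuous p.
  by move=> x; apply/differentiable_continuous/derivable1_diffP.
have [C HC] := cont_bound pc (@segment_compact R (- S) S).
exists `|C|; split => // t tS.
apply: le_trans (HC t _) (ler_norm _).
by rewrite /= in_itv /= -ler_norml.
Qed.

Lemma gen : C1_field f -> forall (lam0 rl : R) (v : R -> V) (s eps : R),
  `|lam0| <= rl -> 0 < eps ->
  (forall t, derivable v t 1 /\ derive1 v t = f (v t, lam0)) ->
  exists2 del, 0 < del & exists2 eta, 0 < eta &
   forall (u : R -> V) (Lu : R -> R),
    (forall t, derivable u t 1 /\ derive1 u t = f (u t, Lu t)) ->
    (forall t, `|t| <= `|s| -> `|Lu t| <= rl /\ `|Lu t - lam0| < eta) ->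
    `|u 0 - v 0| < del -> `|u s - v s| < eps.
Proof.
move=> hf lam0 rl v s eps hl e0 hv.
have rl0 : 0 <= rl by apply: le_trans hl.
have [C [C0 HC]] := traj_bound `|s| (fun t => (hv t).1).
pose r := C + 1 + rl.
have [K [K0 HK]] := loclip hf r.
pose M := 2 * n%:R * K + 1.
pose X := expR (M * `|s|).
have X0 : 0 < X by apply: expR_gt0.
pose k := Num.min 1 (eps ^+ 2).
have k0 : 0 < k by rewrite lt_min ltr01 exprn_gt0.
have k1 : k <= 1 by rewrite ge_min lexx.
have ke : k <= eps ^+ 2 by rewrite ge_min lexx orbT.
pose Q := k / (4 * X).
have Q0 : 0 < Q by apply: divr_gt0 => //; apply: mulr_gt0.
have QX : 2 * Q * X < k.
  rewrite /Q; have -> : 2 * (k / (4 * X)) * X = k / 2.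
    by field; rewrite gt_eqF.
  lra.
have n0 : (0 : R) <= n%:R by [].
have n1 : (0 : R) < n%:R + 1 by lra.
pose del := Num.min 1 (Q / (n%:R + 1)).
have del0 : 0 < del by rewrite lt_min ltr01 divr_gt0.
have del1 : del <= 1 by rewrite ge_min lexx.
have delQ : del <= Q / (n%:R + 1) by rewrite ge_min lexx orbT.
pose eta := Q / ((n%:R + 1) * 2 * (K + 1)).
have eta0 : 0 < eta by apply: divr_gt0 => //; apply: mulr_gt0 => //; lra.
have hdel : n%:R * del ^+ 2 <= Q.
  have h1 : del ^+ 2 <= del by rewrite expr2 ler_piMl // ltW.
  have h2 : n%:R * del <= n%:R * (Q / (n%:R + 1)) by rewrite ler_wpM2l.
  have h3 : n%:R * (Q / (n%:R + 1)) <= Q.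
    rewrite mulrA ler_pdivrMr // mulrC ler_wpM2l //; [exact: ltW | lra].
  have := ler_wpM2l n0 h1; lra.
have heta : 2 * n%:R * (K * eta) <= Q.
  have -> : 2 * n%:R * (K * eta) = Q * ((n%:R * K) / ((n%:R + 1) * (K + 1))).
    by rewrite /eta; field; rewrite !gt_eqF //; lra.
  rewrite ler_piMr ?ltW // ltr_pdivrMr; last by apply: mulr_gt0; lra.
  rewrite mul1r mulrDr !mulrDl !mul1r mulr1; have := mulr_ge0 n0 K0; lra.
exists del => //; exists eta => // u Lu hu hLu hu0.
have Ke : 0 <= K * eta by apply: mulr_ge0 => //; exact: ltW.
have := @ccl2 R n u v s K (K * eta) k K0 Ke k1 (fun t => (hu t).1) (fun t => (hv t).1).
move=> H.
have hs : sq (u s - v s) < k.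
  apply: H.
  - move=> t ts h1.
    rewrite (hu t).2 (hv t).2.
    have [hL1 hL2] := hLu t ts.
    have hvt := HC t ts.
    have hut : `|u t| <= C + 1.
      have -> : u t = v t + (u t - v t) by rewrite addrC subrK.
      apply: le_trans (ler_normD _ _) _; lra.
    apply: le_trans (HK (u t, Lu t) (v t, lam0) _ _ _ _) _ => /=; try (rewrite /r; lra).
    have hm : Num.max `|u t - v t| `|Lu t - lam0| <= `|u t - v t| + eta.
      rewrite ge_max; apply/andP; split; have := normr_ge0 (u t - v t); lra.
    rewrite prod_normE /= -mulrDr; exact: ler_wpM2l.
  - have hs0 : sq (u 0 - v 0) <= n%:R * del ^+ 2.
      apply: le_trans (sq_le _) _; apply: ler_wpM2l => //.
      by rewrite lerXn2r ?nnegrE ?normr_ge0 ?ltW.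
    have : (sq (u 0 - v 0) + 2 * n%:R * (K * eta)) * X <= (Q + Q) * X.
      by rewrite ler_pM2r //; lra.
    rewrite -/M -/X; lra.
have := norm_sq (u s - v s).
move=> hn; rewrite ltNge; apply/negP => h.
have : eps ^+ 2 <= `|u s - v s| ^+ 2 by rewrite lerXn2r ?nnegrE ?normr_ge0 ?(ltW e0).
lra.
Qed.
End S.

Section S.
Variable R : realType.
Variable n : nat.
Local Notation V := 'rV[R]_n.
Variable f : V * R -> V.

Definition UL (sg : R) (A : R -> set V) : set V :=
  \bigcap_(tau in [set tau : R | 0 < tau])
     closure (\bigcup_(t in [set t : R | tau <= sg * t]) A t).

Lemma shift_der (W : normedModType R) (g : R -> W) a c : derivable g (a + c) 1 ->
  derivable (fun t => g (a + t)) c 1 /\ derive1 (fun t => g (a + t)) c = derive1 g (a + c).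
Proof.
move=> dg.
have dn : derivable (fun t : R => a + t) c 1 by apply: derivableD.
have [h1 h2] := @chain1 R W g (fun t => a + t) c dn dg.
split; first exact: h1.
rewrite (_ : (fun t => g (a + t)) = g \o (fun t => a + t)) //.
rewrite h2 derive1E deriveD // derive_id derive_cst add0r.
by rewrite scale1r.
Qed.

Lemma small_eq (a b : V) : (forall e : R, 0 < e -> `|a - b| < e) -> a = b.
Proof.
move=> h; apply/eqP; rewrite -subr_eq0 -normr_eq0; apply/eqP.
apply/eqP; rewrite eq_le normr_ge0 andbT leNgt; apply/negP => hp.
by have := h _ hp; rewrite ltxx.
Qed.


Lemma flow_inv : C1_field f -> forall lam phi, autonomous_flow f lam phi ->
  forall s x, phi s (phi (- s) x) = x.
Proof.
move=> hf lam phi hphi s x.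
pose v := fun t => phi (- s + t) x.
have hv t : derivable v t 1 /\ derive1 v t = f (v t, lam).
  have [d1 d2] := (hphi x).2 (- s + t).
  have [h1 h2] := @shift_der _ (fun t => phi t x) (- s) t d1.
  by split => //; rewrite h2 d2.
have vs : v s = x by rewrite /v addNr (hphi x).1.
rewrite -{2}vs; apply: small_eq => e e0.
have [del del0 [eta eta0 H]] := @gen R n f hf lam `|lam| v s e (lexx _) e0 hv.
apply: (H (fun t => phi t (phi (- s) x)) (fun _ => lam)).
- by move=> t; exact: ((hphi _).2 t).
- by move=> t _; rewrite subrr normr0.
- by rewrite (hphi _).1 /v addr0 subrr normr0.
Qed.


Lemma stab : C1_field f -> forall (Lam : R -> R) (r : R) Phi (lam : R) phi (lm lp sg : R),
  `|sg| = 1 -> (forall t, lm < Lam t < lp) -> lm <= lam <= lp ->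
  solution_cocycle f Lam r Phi -> autonomous_flow f lam phi ->
  (forall e, 0 < e -> exists T, forall t, T <= sg * t -> `|Lam (r * t) - lam| < e) ->
  forall x s e, 0 < e -> exists2 del, 0 < del & exists T, forall t0 y0,
    T <= sg * t0 -> `|y0 - x| < del -> `|Phi (t0 + s) t0 y0 - phi s x| < e.
Proof.
move=> hf Lam r Phi lam phi lm lp sg sg1 hLam /andP[l1 l2] hPhi hphi hconv x s e e0.
pose v := fun t => phi t x.
have hv t : derivable v t 1 /\ derive1 v t = f (v t, lam) := (hphi x).2 t.
have /ler_normlP[m1 m2] := lexx `|lm|.
have /ler_normlP[p1 p2] := lexx `|lp|.
have hl : `|lam| <= `|lm| + `|lp| by apply/ler_normlP; split; lra.
have [del del0 [eta eta0 H]] := @gen R n f hf lam (`|lm| + `|lp|) v s e hl e0 hv.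
have [T1 HT1] := hconv eta eta0.
exists del => //; exists (T1 + `|s|) => t0 y0 hT hy.
apply: (H (fun t => Phi (t0 + t) t0 y0) (fun t => Lam (r * (t0 + t)))).
- move=> t.
  have [d1 d2] := (hPhi t0 y0).2 (t0 + t).
  have [h1 h2] := @shift_der _ (fun t => Phi t t0 y0) t0 t d1.
  by split => //; rewrite h2 d2.
- move=> t ts; split.
    have /andP[a1 a2] := hLam (r * (t0 + t)).
    by apply/ler_normlP; split; lra.
  apply: HT1.
  have : `|sg * t| <= `|s| by rewrite normrM sg1 mul1r.
  move=> /ler_normlP [b1 b2].
  rewrite mulrDr; lra.
- by rewrite addr0 (hPhi t0 y0).1 /v (hphi x).1.
Qed.


Lemma main_side : C1_field f -> forall (Lam : R -> R) (r : R) Phi (lam : R) phi (lm lp sg : R)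
  (A : R -> set V),
  `|sg| = 1 -> (forall t, lm < Lam t < lp) -> lm <= lam <= lp ->
  solution_cocycle f Lam r Phi -> autonomous_flow f lam phi -> invariant_set Phi A ->
  (forall e, 0 < e -> exists T, forall t, T <= sg * t -> `|Lam (r * t) - lam| < e) ->
  forall s, phi s @` UL sg A = UL sg A.
Proof.
move=> hf Lam r Phi lam phi lm lp sg A sg1 hLam hl hPhi hphi hinv hconv.
have fwd : forall s x, UL sg A x -> UL sg A (phi s x).
  move=> s x Bx tau /= tau0 N /nbhs_ballP [eps eps0 hN].
  have [del del0 [T HT]] := stab hf sg1 hLam hl hPhi hphi hconv x s eps0.
  pose tau' := Num.max (tau + `|s|) T + 1.
  have m1 : tau + `|s| <= Num.max (tau + `|s|) T by rewrite le_max lexx.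
  have m2 : T <= Num.max (tau + `|s|) T by rewrite le_max lexx orbT.
  have s0 := normr_ge0 s.
  have tau'0 : 0 < tau' by rewrite /tau'; lra.
  have [y [[t0 ht0 Ay] bxy]] := Bx tau' tau'0 _ (nbhsx_ballx x del del0).
  exists (Phi (t0 + s) t0 y); split.
    exists (t0 + s).
      rewrite /= mulrDr.
      have : `|sg * s| <= `|s| by rewrite normrM sg1 mul1r.
      move=> /ler_normlP [b1 b2]; rewrite /= /tau' in ht0; lra.
    by rewrite -(hinv (t0 + s) t0); exists y.
  apply: hN; rewrite -ball_normE /= distrC; apply: HT.
    by rewrite /= /tau' in ht0; lra.
  by move: bxy; rewrite -ball_normE /= distrC.
move=> s; apply/seteqP; split.
  by move=> _ [x Bx <-]; exact: fwd.
move=> x Bx; exists (phi (- s) x); first exact: fwd.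
exact: (flow_inv hf hphi).
Qed.

End S.

Unset Implicit Arguments.
Set Strict Implicit.

Theorem lemma2p1 (R : realType) (n : nat)
    (f : 'rV[R]_n * R -> 'rV[R]_n) (lm lp : R) (Lam : R -> R) (r : R)
    (Phi : R -> R -> 'rV[R]_n -> 'rV[R]_n)
    (phim phip : R -> 'rV[R]_n -> 'rV[R]_n)
    (A : R -> set 'rV[R]_n) :
  C1_field f -> lm < lp -> parameter_shift Lam lm lp -> 0 < r ->
  solution_cocycle f Lam r Phi ->
  autonomous_flow f lm phim -> autonomous_flow f lp phip ->
  nonautonomous_set A -> invariant_set Phi A ->
  (bounded_rv (upper_backward_limit A) ->
     forall s, phim s @` upper_backward_limit A = upper_backward_limit A) /\
  (bounded_rv (upper_forward_limit A) ->
     forall s, phip s @` upper_forward_limit A = upper_forward_limit A).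
Proof.
move=> hf lmp [_ [hLam [hm [hp _]]]] r0 hPhi hphim hphip _ hinv.
have lm_le : lm <= lm <= lp by rewrite lexx ltW.
have lp_le : lm <= lp <= lp by rewrite lexx ltW.
refine (conj _ _) => _ s.
- have -> : upper_backward_limit A = UL (-1) A.
    rewrite /upper_backward_limit /UL; congr bigcap; apply/funext => tau.
    congr (closure (bigcup _ _)); apply/funext => t; apply/propext.
    by rewrite /= mulN1r lerNr.
  apply: (@main_side R n f hf Lam r Phi lm phim lm lp (-1) A _ hLam lm_le hPhi hphim hinv).
  + by rewrite normrN normr1.
  + move=> e e0.
    have := (cvgrPdist_lt _ _).1 hm e e0.
    move=> [M [_ HM]].
    exists (1 - M / r) => t ht.
    rewrite distrC; apply: HM.
    have : t < M / r by rewrite mulN1r in ht; lra.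
    by rewrite ltr_pdivlMr // mulrC.
- have -> : upper_forward_limit A = UL 1 A.
    rewrite /upper_forward_limit /UL; congr bigcap; apply/funext => tau.
    congr (closure (bigcup _ _)); apply/funext => t; apply/propext.
    by rewrite /= mul1r.
  apply: (@main_side R n f hf Lam r Phi lp phip lm lp 1 A _ hLam lp_le hPhi hphip hinv).
  + by rewrite normr1.
  + move=> e e0.
    have := (cvgrPdist_lt _ _).1 hp e e0.
    move=> [M [_ HM]].
    exists (M / r + 1) => t ht.
    rewrite distrC; apply: HM.
    have : M / r < t by rewrite mul1r in ht; lra.
    by rewrite ltr_pdivrMr // mulrC.
Qed.
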